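(* For any discrete group $G$, $HC^\pm_\bullet(kG;1,\varepsilon)\cong HC^\pm_\bullet(G,k)$.
   Context: $k$ is a field of characteristic $0$; $kG$ is the group Hopf algebra ($\Delta(g)=g\otimes g$, $\varepsilon(g)=1$, $S(g)=g^{-1}$). $HC^\pm_\bullet(kG;1,\varepsilon)$ is the dihedral homology of the dihedral module $\mathrm{CC}_n(kG;1,\varepsilon)=(kG)^{\otimes n}$ with faces $\partial_0(g_1\otimes\cdots\otimes g_n)=g_2\otimes\cdots\otimes g_n$, $\partial_i=g_1\otimes\cdots\otimes g_ig_{i+1}\otimes\cdots\otimes g_n$ ($1\le i\le n-1$), $\partial_n=g_1\otimes\cdots\otimes g_{n-1}$, degeneracies inserting $1$, $\tau_n(g_1\otimes\cdots\otimes g_n)=(g_1\cdots g_n)^{-1}\otimes g_1\otimes\cdots\otimes g_{n-1}$, $\omega_n(g_1\otimes\cdots\otimes g_n)=g_n^{-1}\otimes\cdots\otimes g_1^{-1}$. The dihedral group homology $HC^\pm_\bullet(G,k)$ is the dihedral homology of the dihedral submodule of the standard dihedral module of the $*$-algebra $kG$ (with $g^*=g^{-1}$; $\mathcal{A}^{\otimes n+1}$ with faces multiplying adjacent factors and cyclically the last with the first, $\tau_n(a_0\otimes\cdots\otimes a_n)=a_n\otimes a_0\otimes\cdots\otimes a_{n-1}$, $\omega_n(a_0\otimes\cdots\otimes a_n)=a_0^*\otimes a_n^*\otimes\cdots\otimes a_1^*$) spanned by the tensors $g_0\otimes\cdots\otimes g_n$ with $g_i\in G$ and $g_0g_1\cdots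 g_n=1$. Dihedral homology means homology of the $\pm1$-eigenspaces of the involution on the cyclic complex. *)

(* Defs.v *)
From HB Require Import structures.
From mathcomp Require Import all_boot all_order all_algebra.
From mathcomp Require Import finmap.
From mathcomp.multinomials Require Import monalg.

Set Implicit Arguments.
Unset Strict Implicit.
Unset Printing Implicit Defensive.

Import GRing.Theory.
Local Open Scope ring_scope.

(* A dihedral k-module whose structure maps are k-linear extensions of maps  *)
(* of bases.  [dX n] is a basis of the degree-n module (so the module is the *)
(* free k-module {malg k[dX n]}), [dface n i] is the face d_i : degree n+1   *)
(* -> degree n (i = 0..n+1), [dtau n] is tau_n, [domega n] is omega_n.       *)
(* [dsub n] is a subset of the basis: the dihedral module under              *)
(* consideration is the submodule spanned by the basis elements in           *)
(* [dsub n] (the operators are given on the ambient module).  Degeneracies   *)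
(* play no role in the cyclic (Connes) complex and are omitted.              *)
Record dihedral_basis := DihedralBasis {
  dX : nat -> choiceType;
  dface : forall n, 'I_n.+2 -> dX n.+1 -> dX n;
  dtau : forall n, dX n -> dX n;
  domega : forall n, dX n -> dX n;
  dsub : forall n, pred (dX n)
}.

Section DihedralHomology.
Variable k : fieldType.

Definition linext (X Y : choiceType) (f : X -> Y) (p : {malg k[X]}) :
  {malg k[Y]} := \sum_(x <- msupp p) << p@_x *g f x >>.

Variable D : dihedral_basis.

Definition Ch n := {malg k[dX D n]}.

Definition inM n (p : Ch n) : Prop := forall x, x \in msupp p -> @dsub D n x.

Definition bnd n (p : Ch n.+1) : Ch n :=
  \sum_(i < n.+2) (-1) ^+ i *: linext (@dface D n i) p.

Definition cyc n (p : Ch n) : Ch n := (-1) ^+ n *: linext (@dtau D n) p.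

Definition invol n (p : Ch n) : Ch n :=
  (-1) ^+ 'C(n.+1, 2) *: linext (@domega D n) p.

(* I_n = (1 - t_n) M_n : C^lambda_n = M_n / I_n is the Connes complex *)
Definition inI n (p : Ch n) : Prop := exists u : Ch n, inM u /\ p = u - cyc u.

(* E_n(s) / I_n is the (-1)^s eigenspace of y on C^lambda_n *)
Definition inE (s : bool) n (p : Ch n) : Prop :=
  inM p /\ inI (invol p - (-1) ^+ s *: p).

Definition isCycle (s : bool) n : Ch n -> Prop :=
  match n return Ch n -> Prop with
  | 0 => fun p => inE s p
  | m.+1 => fun p => inE s p /\ inI (bnd p)
  end.

Definition isBoundary (s : bool) n (p : Ch n) : Prop :=
  exists u : Ch n, exists w : Ch n.+1,
    [/\ inM u, inE s w & p = (u - cyc u) + bnd w].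

End DihedralHomology.

(* HC^{(-1)^s}_n(D1) ~= HC^{(-1)^s}_n(D2) as k-vector spaces: there is a map *)
(* on cycle representatives, k-linear on cycles, preserving cycles and      *)
(* boundaries, and inducing a bijection on homology classes.                *)
Definition HC_iso (k : fieldType) (s : bool) (n : nat)
    (D1 D2 : dihedral_basis) : Prop :=
  exists f : Ch k D1 n -> Ch k D2 n,
  [/\ forall (a : k) (x y : Ch k D1 n), isCycle s x -> isCycle s y ->
        f (a *: x + y) = a *: f x + f y,
      forall x : Ch k D1 n, isCycle s x -> isCycle s (f x),
      forall x : Ch k D1 n, isCycle s x -> isBoundary s x -> isBoundary s (f x),
      forall x : Ch k D1 n, isCycle s x -> isBoundary s (f x) -> isBoundary s x
    & forall z : Ch k D2 n, isCycle s z ->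
        exists2 x : Ch k D1 n, isCycle s x & isBoundary s (f x - z)].

(* The two dihedral modules for a group G.  Tensors g_1 (x) ... (x) g_m of   *)
(* group elements are encoded as finite functions 'I_m -> G (the basis of    *)
(* (kG)^{(x) m}); operations are written on the sequence of entries.        *)
Section GroupDihedral.
Variable G : groupType.
Local Open Scope group_scope.

Definition mkT m (s : seq G) : {ffun 'I_m -> G} := [ffun j : 'I_m => nth 1 s (nat_of_ord j)].
Definition gprod (s : seq G) : G := foldr (fun a b => a * b) 1 s.

(* CC_n(kG;1,eps) = (kG)^{(x) n}, basis G^n *)
Definition cc_face_seq (i : nat) (s : seq G) : seq G :=
  if i == 0%N then behead s
  else if (i < size s)%N
       then take i.-1 s ++ (nth 1 s i.-1 * nth 1 s i) :: drop i.+1 s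
       else take i.-1 s.
Definition cc_tau_seq (s : seq G) : seq G :=
  (gprod s)^-1 :: take (size s).-1 s.
Definition cc_omega_seq (s : seq G) : seq G := rev (map (fun g => g^-1) s).

Definition CC_basis : dihedral_basis :=
  @DihedralBasis (fun n => {ffun 'I_n -> G} : choiceType)
    (fun n i x => mkT n (cc_face_seq i (codom x)))
    (fun n x => mkT n (cc_tau_seq (codom x)))
    (fun n x => mkT n (cc_omega_seq (codom x)))
    (fun n x => true).

(* Standard dihedral module of the *-algebra kG: degree n is kG^{(x) n+1},  *)
(* basis G^{n+1}; dihedral submodule spanned by g_0 (x) ... (x) g_n with     *)
(* g_0 g_1 ... g_n = 1.                                                     *)
Definition std_face_seq (i : nat) (s : seq G) : seq G :=
  if (i.+1 < size s)%N
  then take i s ++ (nth 1 s i * nth 1 s i.+1) :: drop i.+2 s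
  else (nth 1 s (size s).-1 * nth 1 s 0) :: take (size s - 2) (behead s).
Definition std_tau_seq (s : seq G) : seq G := rotr 1 s.
Definition std_omega_seq (s : seq G) : seq G :=
  (head 1 s)^-1 :: rev (map (fun g => g^-1) (behead s)).

Definition Std_basis : dihedral_basis :=
  @DihedralBasis (fun n => {ffun 'I_n.+1 -> G} : choiceType)
    (fun n i x => mkT n.+1 (std_face_seq i (codom x)))
    (fun n x => mkT n.+1 (std_tau_seq (codom x)))
    (fun n x => mkT n.+1 (std_omega_seq (codom x)))
    (fun n x => gprod (codom x) == 1).

End GroupDihedral.

(* Main.v *)
Require Import Defs.
From HB Require Import structures.
From mathcomp Require Import all_boot all_order all_algebra.
From mathcomp Require Import finmap.
From mathcomp.multinomials Require Import monalg.
From mathcomp Require Import zify.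
Set Implicit Arguments.
Unset Strict Implicit.
Import GRing.Theory.
Local Open Scope ring_scope.


Section Lin.
Variable k : fieldType.
Variables X Y Z : choiceType.

Lemma linextEw (f : X -> Y) (p : {malg k[X]}) (d : {fset X}) :
  (msupp p `<=` d)%fset -> linext f p = \sum_(x <- d) << p@_x *g f x >>.
Proof.
move=> le; rewrite /linext; apply: big_fset_incl => // x _ xn.
by rewrite mcoeff_outdom // monalgU0.
Qed.

Lemma linextD (f : X -> Y) : {morph linext (k:=k) f : p q / p + q}.
Proof.
move=> p q.
rewrite (linextEw f (msuppD_le p q)) (linextEw f (fsubsetUl (msupp p) (msupp q))).
rewrite (linextEw f (fsubsetUr (msupp p) (msupp q))) -big_split /=.
by apply: eq_bigr => x _; rewrite mcoeffD monalgUD.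
Qed.

Lemma linext0 (f : X -> Y) : linext (k:=k) f 0 = 0.
Proof. by rewrite /linext msupp0 big_nil. Qed.

Lemma linextZ (f : X -> Y) (c : k) p : linext f (c *: p) = c *: linext f p.
Proof.
rewrite (linextEw f (msuppZ_le c p)) /linext scaler_sumr.
apply: eq_bigr => x _; apply/malgP => z.
by rewrite !mcoeffZ !mcoeffU mulrnAr.
Qed.

Lemma linext_sum (f : X -> Y) I (r : seq I) (P : pred I) (F : I -> {malg k[X]}) :
  linext f (\sum_(i <- r | P i) F i) = \sum_(i <- r | P i) linext f (F i).
Proof. exact: (big_morph _ (linextD f) (linext0 f)). Qed.

Lemma linextU (f : X -> Y) (c : k) x : linext f << c *g x >> = << c *g f x >>.
Proof.
rewrite /linext msuppU; case: eqP => [->|_]; first by rewrite big_nil monalgU0.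
by rewrite big_seq_fset1 mcoeffUU.
Qed.

End Lin.
Section Lin2.
Variable k : fieldType.
Variables X Y Z : choiceType.

Lemma linext_comp (f : X -> Y) (g : Y -> Z) (p : {malg k[X]}) :
  linext g (linext f p) = linext (fun x => g (f x)) p.
Proof.
by rewrite [linext f p]/linext linext_sum; apply: eq_bigr => x _; rewrite linextU.
Qed.

Lemma linext_id (p : {malg k[X]}) : linext id p = p.
Proof. exact: (esym (monalgE p)). Qed.

Lemma linext_eq (f g : X -> Y) (p : {malg k[X]}) :
  (forall x, x \in msupp p -> f x = g x) -> linext f p = linext g p.
Proof.
move=> e; rewrite /linext big_seq [RHS]big_seq.
by apply: eq_bigr => x /e ->.
Qed.

Lemma linext_supp (f : X -> Y) (P : pred Y) (p : {malg k[X]}) :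
  (forall x, P (f x)) -> forall y, y \in msupp (linext f p) -> P y.
Proof.
move=> HP y; apply: contraTT => Py; rewrite -mcoeff_eq0 /linext raddf_sum.
rewrite big1 // => x _; rewrite /= mcoeffU; case: eqP => // e.
by rewrite -e HP in Py.
Qed.
End Lin2.
Section Grp.
Variable G : groupType.
Local Open Scope group_scope.

Definition phis (s : seq G) : seq G := (gprod s)^-1 :: s.

Lemma gprod_cons (a : G) (s : seq G) : gprod (a :: s) = a * gprod s. Proof. by []. Qed.

Lemma gprod_cat (s1 s2 : seq G) : gprod (s1 ++ s2) = gprod s1 * gprod s2.
Proof.
elim: s1 => [|a s1 IH] /=; first by rewrite mul1g.
by rewrite IH mulgA.
Qed.

Lemma gprod_rcons (s : seq G) (a : G) : gprod (rcons s a) = gprod s * a.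
Proof. by rewrite -cats1 gprod_cat /= mulg1. Qed.

Lemma codom_mkT m (s : seq G) : size s = m -> codom (mkT m s) = s.
Proof.
move=> sz; apply: (@eq_from_nth _ 1); first by rewrite size_codom card_ord.
move=> i; rewrite size_codom card_ord => lt.
rewrite codomE (nth_map (Ordinal lt)) ?size_enum_ord // ffunE.
by rewrite nth_enum_ord.
Qed.

Lemma mkT_codom m (x : {ffun 'I_m -> G}) : mkT m (codom x) = x.
Proof.
apply/ffunP => j; rewrite ffunE codomE (nth_map j) ?size_enum_ord //.
by rewrite nth_ord_enum.
Qed.

Lemma face_seq n (s : seq G) i : size s = n.+1 -> (i <= n.+1)%N ->
  size (cc_face_seq i s) = n /\ phis (cc_face_seq i s) = std_face_seq i (phis s).
Proof.
move=> sz le.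
case: i le => [|j] le.
  case: s sz => [|a t] //= [sz]; split => //.
  rewrite /phis /std_face_seq /=.
  by rewrite /cc_face_seq /= drop0 invgM -mulgA mulVg mulg1.
have [ltj|] := ltnP j n.
  have e : s = take j s ++ nth 1 s j :: nth 1 s j.+1 :: drop j.+2 s.
    by rewrite -!drop_nth ?cat_take_drop // sz ltnS // ltnW.
  rewrite /cc_face_seq /= ifT ?sz ?ltnS //; split.
    rewrite size_cat /= size_take size_drop sz ifT; last lia. lia.
  rewrite /phis /std_face_seq /= ifT ?sz ?ltnS //=.
  rewrite /phis /std_face_seq /=.
  congr (_ :: _); congr (_^-1); rewrite [in RHS]e !gprod_cat /=. by rewrite !mulgA.
move=> lenj; have ejn : j = n by apply/eqP; rewrite eqn_leq lenj -ltnS le.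
subst j.
case/lastP: s sz => [|t a] //; rewrite size_rcons => -[sz].
rewrite /cc_face_seq /= ifF ?size_rcons ?sz ?ltnn //.
rewrite -cats1 take_size_cat ?sz //; split => //.
rewrite /phis /std_face_seq /= size_cat sz addn1 ltnn /=.
rewrite subn2 /= take_size_cat ?sz // nth_cat sz ltnn subnn /=.
by rewrite gprod_cat /= mulg1 invgM mulgA mulgV mul1g.
Qed.

Lemma tau_seq (s : seq G) : s != [::] ->
  size (cc_tau_seq s) = size s /\ phis (cc_tau_seq s) = std_tau_seq (phis s).
Proof.
case/lastP: s => [|t a] // _; rewrite /cc_tau_seq size_rcons /=. rewrite -cats1 take_size_cat // cats1; split => //.
rewrite /phis /std_tau_seq -rcons_cons rotr1_rcons.
by rewrite gprod_cons invgM invgK gprod_rcons mulKg.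
Qed.

Lemma gprod_omega (s : seq G) : gprod (cc_omega_seq s) = (gprod s)^-1.
Proof.
rewrite /cc_omega_seq; elim: s => [|a s IH] /=; first by rewrite invg1.
by rewrite rev_cons gprod_rcons IH invgM.
Qed.

Lemma omega_seq (s : seq G) :
  size (cc_omega_seq s) = size s /\ phis (cc_omega_seq s) = std_omega_seq (phis s).
Proof.
split; first by rewrite /cc_omega_seq size_rev size_map.
by rewrite /phis /std_omega_seq /= gprod_omega.
Qed.

Lemma gprod_phis (s : seq G) : gprod (phis s) = 1.
Proof. by rewrite /phis gprod_cons mulVg. Qed.

End Grp.
Section Abs.
Variables (k : fieldType) (D1 D2 : dihedral_basis) (s : bool).
Variable F : forall n, Ch k D1 n -> Ch k D2 n.
Hypothesis FD : forall n (a : k) (x y : Ch k D1 n), F (a *: x + y) = a *: F x + F y.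
Hypothesis Finj : forall n, injective (@F n).
Hypothesis Fcyc : forall n (x : Ch k D1 n), F (cyc x) = cyc (F x).
Hypothesis Finv : forall n (x : Ch k D1 n), F (invol x) = invol (F x).
Hypothesis Fbnd : forall n (x : Ch k D1 n.+1), F (bnd x) = bnd (F x).
Hypothesis FM : forall n (x : Ch k D1 n), inM x -> inM (F x).
Hypothesis FMs : forall n (y : Ch k D2 n), inM y -> exists2 x : Ch k D1 n, inM x & F x = y.

Lemma F0 n : F (0 : Ch k D1 n) = 0.
Proof.
have := @FD n 1 0 0; rewrite scale1r addr0 => /(congr1 (fun z => z - F 0)).
rewrite subrr addrK scale1r => e; exact: esym e.
Qed.

Lemma FB n (x y : Ch k D1 n) : F (x - y) = F x - F y.
Proof. by rewrite -scaleN1r addrC FD scaleN1r addrC. Qed.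

Lemma FZ n (a : k) (x : Ch k D1 n) : F (a *: x) = a *: F x.
Proof. by have := @FD n a x 0; rewrite !addr0 F0 addr0. Qed.

Lemma FD2 n (x y : Ch k D1 n) : F (x + y) = F x + F y.
Proof. by have := @FD n 1 x y; rewrite !scale1r. Qed.

Lemma inM_F n (x : Ch k D1 n) : inM (F x) -> inM x.
Proof. by case/FMs => x' Mx' /Finj <-. Qed.

Lemma inI_F n (x : Ch k D1 n) : inI (F x) <-> inI x.
Proof.
split.
  case=> u [Mu e]; case: (FMs Mu) => u' Mu' eu; exists u'; split => //.
  by apply: Finj; rewrite FB Fcyc eu.
by case=> u [Mu ->]; exists (F u); split; [exact: FM | rewrite FB Fcyc].
Qed.

Lemma inE_F n (x : Ch k D1 n) : Defs.inE s (F x) <-> Defs.inE s x.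
Proof.
split.
  case=> /inM_F Mx I; split => //; apply/(inI_F (invol x - (-1) ^+ s *: x)); rewrite FB Finv FZ; exact I.
case=> Mx I; split; first exact: FM.
by have := proj2 (inI_F (invol x - (-1) ^+ s *: x)) I; rewrite FB Finv FZ.
Qed.

Lemma isCycle_F n (x : Ch k D1 n) : isCycle s (F x) <-> isCycle s x.
Proof.
case: n x => [|n] x /=; first exact: inE_F.
split.
  by case=> /inE_F H1; rewrite -Fbnd => /inI_F H2.
by case=> /inE_F H1 /inI_F H2; split => //; rewrite -Fbnd.
Qed.

Lemma isBoundary_F n (x : Ch k D1 n) : isBoundary s x -> isBoundary s (F x).
Proof.
case=> u [w [Mu Ew ->]]; exists (F u), (F w); split.
- exact: FM.
- by apply/inE_F.
- by rewrite FD2 FB Fcyc Fbnd.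
Qed.

Lemma isBoundary_Fr n (x : Ch k D1 n) : isBoundary s (F x) -> isBoundary s x.
Proof.
case=> u [w [Mu Ew e]]; case: (FMs Mu) => u' Mu' eu.
case: (Ew) => Mw _; case: (FMs Mw) => w' Mw' ew.
exists u', w'; split => //.
  by apply/inE_F; rewrite ew.
by apply: Finj; rewrite e FD2 FB Fcyc Fbnd eu ew.
Qed.

Lemma HC_iso_of n : HC_iso k s n D1 D2.
Proof.
exists (@F n); split.
- by move=> a x y _ _; apply: FD.
- by move=> x /isCycle_F.
- by move=> x _; apply: isBoundary_F.
- by move=> x _; apply: isBoundary_Fr.
move=> z Cz.
have Mz : inM z by case: n z Cz => [|n] z /= => [[]|[[]]].
case: (FMs Mz) => x Mx ex; exists x; first by apply/isCycle_F; rewrite ex.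
rewrite ex subrr; exists 0, 0; split.
- by move=> y; rewrite msupp0.
- split; first by move=> y; rewrite msupp0.
  exists 0; split; first by move=> y; rewrite msupp0.
  by rewrite /invol /cyc /linext !msupp0 !big_nil !scaler0 !subrr.
by rewrite /cyc /bnd /linext msupp0 big_nil scaler0 subrr add0r big1 // => i _; rewrite msupp0 big_nil scaler0.
Qed.
End Abs.

Section Main.
Variables (k : fieldType) (G : groupType).
Local Open Scope group_scope.

Definition phi n (x : {ffun 'I_n -> G}) : {ffun 'I_n.+1 -> G} := mkT n.+1 (phis (codom x)).
Definition psi n (x : {ffun 'I_n.+1 -> G}) : {ffun 'I_n -> G} := mkT n (behead (codom x)).

Lemma size_codomT n (x : {ffun 'I_n -> G}) : size (codom x) = n.
Proof. by rewrite size_codom card_ord. Qed.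

Lemma phi_face n (i : 'I_n.+2) (x : {ffun 'I_n.+1 -> G}) :
  phi (@dface (CC_basis G) n i x) = @dface (Std_basis G) n i (phi x).
Proof.
rewrite /phi /=.
have [sz e] := face_seq (size_codomT x) (ltn_ord i : (i <= n.+1)%N).
by rewrite codom_mkT // codom_mkT ?e //= size_codomT.
Qed.

Lemma phi_tau n (x : {ffun 'I_n -> G}) :
  phi (@dtau (CC_basis G) n x) = @dtau (Std_basis G) n (phi x).
Proof.
rewrite /phi /=.
case: n x => [|n] x.
  have c0 : forall y : {ffun 'I_0 -> G}, codom y = [::].
    by move=> y; apply: size0nil; rewrite size_codomT.
  by rewrite !c0 codom_mkT.
have ne : codom x != [::] by rewrite -size_eq0 size_codomT.
have [sz e] := tau_seq ne.
by rewrite codom_mkT ?sz ?size_codomT // codom_mkT ?e //= size_codomT.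
Qed.

Lemma phi_omega n (x : {ffun 'I_n -> G}) :
  phi (@domega (CC_basis G) n x) = @domega (Std_basis G) n (phi x).
Proof.
rewrite /phi /=.
have [sz e] := omega_seq (codom x).
by rewrite codom_mkT ?sz ?size_codomT // codom_mkT ?e //= size_codomT.
Qed.

Lemma phi_sub n (x : {ffun 'I_n -> G}) : @dsub (Std_basis G) n (phi x).
Proof. by rewrite /= /phi codom_mkT ?gprod_phis //= size_codomT. Qed.

Lemma psi_phi n (x : {ffun 'I_n -> G}) : psi (phi x) = x.
Proof. by rewrite /psi /phi codom_mkT /= ?mkT_codom // size_codomT. Qed.

Lemma phi_psi n (y : {ffun 'I_n.+1 -> G}) : @dsub (Std_basis G) n y -> phi (psi y) = y.
Proof.
rewrite /= /phi /psi; have := size_codomT y.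
case e: (codom y) => [|c t] //= [sz] /eqP.
move=> /mulg1_eq ec.
rewrite codom_mkT // /phis -ec invgK -e; exact: mkT_codom.
Qed.

Definition FF n (p : Ch k (CC_basis G) n) : Ch k (Std_basis G) n := linext (@phi n) p.

Lemma proposition_aux s n : HC_iso k s n (CC_basis G) (Std_basis G).
Proof.
apply: (@HC_iso_of k (CC_basis G) (Std_basis G) s FF).
- by move=> m a x y; rewrite /FF linextD linextZ.
- move=> m; apply: (can_inj (g := linext (@psi m))) => p.
  rewrite /FF linext_comp (linext_eq (g := id)) ?linext_id // => x _.
  exact: psi_phi.
- move=> m x; rewrite /FF /cyc !linextZ !linext_comp; congr (_ *: _).
  by apply: linext_eq => y _; rewrite /= phi_tau.
- move=> m x; rewrite /FF /invol !linextZ !linext_comp; congr (_ *: _).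
  by apply: linext_eq => y _; rewrite /= phi_omega.
- move=> m x; rewrite /FF /bnd linext_sum; apply: eq_bigr => i _.
  rewrite !linextZ !linext_comp; congr (_ *: _).
  by apply: linext_eq => y _; rewrite /= phi_face.
- move=> m x _ y; apply: (linext_supp (P := @dsub (Std_basis G) m)).
  exact: phi_sub.
move=> m y My; exists (linext (@psi m) y); first by [].
rewrite /FF linext_comp -[RHS]linext_id; apply: linext_eq => x /My.
exact: phi_psi.
Qed.
End Main.

Theorem proposition5p6 (k : fieldType) (k_char0 : [pchar k] =i pred0)
    (G : groupType) (s : bool) (n : nat) :
  HC_iso k s n (CC_basis G) (Std_basis G).
Proof. exact: proposition_aux. Qed.
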